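(* In the Ornstein–Uhlenbeck setting described in the context, the optimal intervention boundaries satisfy: as functions of $c_1$ (all other parameters fixed), $c_1\mapsto a^*(c_1)$ is decreasing and $c_1\mapsto b^*(c_1)$ is increasing; as functions of $c_2$ (all other parameters fixed), $c_2\mapsto a^*(c_2)$ is decreasing and $c_2\mapsto b^*(c_2)$ is increasing.
   Context: Fix parameters $r>0$, $\rho>0$, $m\in\mathbb{R}$, $\sigma>0$, $\theta\in\mathbb{R}$ and constant marginal intervention costs $c_1,c_2\in\mathbb{R}$ with $c_1+c_2>0$ (the parameters are varied only within this range). The (log-)exchange rate controlled by $\nu=\xi-\eta$ (difference of two nondecreasing adapted left-continuous processes started at $0$, with increments on disjoint sets) evolves as $dX_t=\rho(m-X_t)dt+\sigma dB_t+d\xi_t-d\eta_t$, $X_0=x\in\mathbb{R}$, where $B$ is a Brownian motion. The central bank minimizes over admissible controls $\mathbb{E}_x[\int_0^\infty e^{-rs}\tfrac12(X_s-\theta)^2ds+c_1\int_0^\infty e^{-rs}d\xi_s+c_2\int_0^\infty e^{-rs}d\eta_s]$ (jumps included). Let $D_\alpha(y)=\frac{e^{-y^2/4}}{\Gamma(-\alpha)}\int_0^\infty t^{-\alpha-1}e^{-t^2/2-yt}dt$ ($\alpha<0$), $\widehat\phi(x)=e^{\rho(x-m)^2/(2\sigma^2)}D_{-(r+\rho)/\rho}\big(\tfrac{(x-m)\sqrt{2\rho}}{\sigma}\big)$, $\widehat\psi(x)=e^{\rho(x-m)^2/(2\sigma^2)}D_{-(r+\rho)/\rho}\big(-\tfrac{(x-m)\sqrt{2\rho}}{\sigma}\big)$,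 $\widehat m'(z)=\frac{2}{\sigma^2}e^{-\rho(z-m)^2/\sigma^2}$. The optimal intervention boundaries $a^*<b^*$ are the unique pair with $a^*<\theta-(r+\rho)c_1$ and $b^*>\theta+(r+\rho)c_2$ solving $\int_a^b(z-\theta+(r+\rho)c_1)\widehat m'\widehat\phi\,dz=-(r+\rho)(c_1+c_2)\int_b^\infty\widehat m'\widehat\phi\,dz$ and $\int_a^b(z-\theta-(r+\rho)c_2)\widehat m'\widehat\psi\,dz=(r+\rho)(c_1+c_2)\int_{-\infty}^a\widehat m'\widehat\psi\,dz$; the optimal policy keeps $X$ in $[a^*,b^*]$ by minimal reflection. *)

(* Defs.v *)
From Stdlib Require Import Reals.
From Coquelicot Require Import Coquelicot.
Open Scope R_scope.

Definition int_0_inf (f : R -> R) : R :=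
  RInt_gen f (at_point 0) (Rbar_locally p_infty).

Definition Gamma_fn (s : R) : R :=
  int_0_inf (fun t => Rpower t (s - 1) * exp (- t)).

(* Parabolic cylinder function, integral representation (alpha < 0):
   D_alpha(y) = e^{-y^2/4}/Gamma(-alpha) int_0^oo t^{-alpha-1} e^{-t^2/2 - y t} dt *)
Definition D_pc (alpha y : R) : R :=
  exp (- y ^ 2 / 4) / Gamma_fn (- alpha) *
  int_0_inf (fun t => Rpower t (- alpha - 1) * exp (- t ^ 2 / 2 - y * t)).

Definition phi_hat (r rho m sigma x : R) : R :=
  exp (rho * (x - m) ^ 2 / (2 * sigma ^ 2)) *
  D_pc (- (r + rho) / rho) ((x - m) * sqrt (2 * rho) / sigma).

Definition psi_hat (r rho m sigma x : R) : R :=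
  exp (rho * (x - m) ^ 2 / (2 * sigma ^ 2)) *
  D_pc (- (r + rho) / rho) (- ((x - m) * sqrt (2 * rho) / sigma)).

Definition m_hat_d (rho m sigma z : R) : R :=
  2 / sigma ^ 2 * exp (- rho * (z - m) ^ 2 / sigma ^ 2).

Definition OptBoundaries (r rho m sigma theta c1 c2 a b : R) : Prop :=
  a < theta - (r + rho) * c1 /\
  theta + (r + rho) * c2 < b /\
  RInt (fun z => (z - theta + (r + rho) * c1) * m_hat_d rho m sigma z
                   * phi_hat r rho m sigma z) a b
  = - (r + rho) * (c1 + c2) *
    RInt_gen (fun z => m_hat_d rho m sigma z * phi_hat r rho m sigma z)
             (at_point b) (Rbar_locally p_infty) /\
  RInt (fun z => (z - theta - (r + rho) * c2) * m_hat_d rho m sigma z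
                   * psi_hat r rho m sigma z) a b
  = (r + rho) * (c1 + c2) *
    RInt_gen (fun z => m_hat_d rho m sigma z * psi_hat r rho m sigma z)
             (Rbar_locally m_infty) (at_point a).

(* Main.v *)
Require Import Defs.
From Stdlib Require Import Reals Lra Psatz Classical FunctionalExtensionality.
From Coquelicot Require Import Coquelicot.
Open Scope R_scope.


Lemma exRc (f : R -> R) (Hc : forall x, continuous f x) a b : ex_RInt f a b.
Proof. apply (@ex_RInt_continuous R_CompleteNormedModule); intros; apply Hc. Qed.

Lemma cont_lin_mul (w : R -> R) (c : R) (Hc : forall x, continuous w x) :
  forall x, continuous (fun z => (z - c) * w z) x.
Proof.
  intros x. apply (continuous_mult (fun z => z - c) w).
  - apply (continuous_minus (fun z => z) (fun _ => c)).
    apply continuous_id. apply continuous_const.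
  - apply Hc.
Qed.

Lemma RInt_chas3 (f : R -> R) (Hc : forall x, continuous f x) a b c :
  RInt f a c = RInt f a b + RInt f b c.
Proof. rewrite <- (RInt_Chasles f a b c); try apply exRc; auto. Qed.

Lemma RInt_swap' (f : R -> R) (Hc : forall x, continuous f x) a b :
  RInt f b a = - RInt f a b.
Proof. rewrite <- (opp_RInt_swap f a b); try apply exRc; auto. Qed.

Lemma RInt_shift (w : R -> R) (Hc : forall x, continuous w x) c c' x y :
  RInt (fun z => (z - c') * w z) x y =
  RInt (fun z => (z - c) * w z) x y + (c - c') * RInt w x y.
Proof.
  transitivity (RInt (fun z => plus ((z - c) * w z) (scal (c - c') (w z))) x y).
  { apply RInt_ext. intros. unfold plus, scal; simpl. unfold mult; simpl. ring. }
  rewrite (RInt_plus (V:=R_CompleteNormedModule)). rewrite (RInt_scal (V:=R_CompleteNormedModule)). reflexivity.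
  apply exRc; auto. apply exRc. apply cont_lin_mul; auto.
  apply (exRc (fun z => scal (c - c') (w z))). intros z.
  apply (continuous_scal (fun _ => c - c') w). apply continuous_const. auto.
Qed.

Lemma RInt_cmp (f g : R -> R) (Hf : forall x, continuous f x) (Hg : forall x, continuous g x)
  p q a b : a <= b -> (forall z, a < z < b -> p * f z <= q * g z) ->
  p * RInt f a b <= q * RInt g a b.
Proof.
  intros Hab H.
  assert (E : forall k (h : R -> R), (forall x, continuous h x) -> k * RInt h a b = RInt (fun z => scal k (h z)) a b).
  { intros k h Hh. rewrite (RInt_scal (V:=R_CompleteNormedModule)). reflexivity. apply exRc; auto. }
  rewrite !E; auto. apply RInt_le; auto.
  - apply (exRc (fun z => scal p (f z))). intros z. apply (continuous_scal (fun _ => p) f). apply continuous_const. auto.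
  - apply (exRc (fun z => scal q (g z))). intros z. apply (continuous_scal (fun _ => q) g). apply continuous_const. auto.
Qed.

Lemma RInt_nonneg (f : R -> R) (Hf : forall x, continuous f x) a b : a <= b ->
  (forall z, a < z < b -> 0 <= f z) -> 0 <= RInt f a b.
Proof. intros. apply RInt_ge_0; auto. apply exRc; auto. Qed.

Lemma RInt_nonpos (f : R -> R) (Hf : forall x, continuous f x) a b : a <= b ->
  (forall z, a < z < b -> f z <= 0) -> RInt f a b <= 0.
Proof.
  intros Hab H.
  assert (1 * RInt f a b <= 1 * RInt (fun _ => 0) a b).
  { apply RInt_cmp; auto. intros; apply continuous_const. intros z Hz. specialize (H z Hz). lra. }
  rewrite (RInt_const (V:=R_CompleteNormedModule)) in H0. unfold scal in H0; simpl in H0; unfold mult in H0; simpl in H0. lra.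
Qed.


Definition I1 (w : R -> R) (y : R) := RInt_gen w (at_point y) (Rbar_locally p_infty).
Definition I2 (w : R -> R) (x : R) := RInt_gen w (Rbar_locally m_infty) (at_point x).

Lemma I1_chas (w : R -> R) (Hc : forall x, continuous w x)
  (He : forall y, ex_RInt_gen w (at_point y) (Rbar_locally p_infty)) y y' :
  I1 w y = RInt w y y' + I1 w y'.
Proof.
  unfold I1. rewrite <- (RInt_gen_Chasles (Fa := at_point y) (Fc := Rbar_locally p_infty) w y').
  - rewrite RInt_gen_at_point. reflexivity. apply exRc; auto.
  - apply ex_RInt_gen_at_point. apply exRc; auto.
  - apply He.
Qed.

Lemma I2_chas (w : R -> R) (Hc : forall x, continuous w x)
  (He : forall y, ex_RInt_gen w (Rbar_locally m_infty) (at_point y)) x x' :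
  I2 w x' = I2 w x + RInt w x x'.
Proof.
  unfold I2. rewrite <- (RInt_gen_Chasles (Fa := Rbar_locally m_infty) (Fc := at_point x') w x).
  - rewrite (RInt_gen_at_point w x x'). reflexivity. apply exRc; auto.
  - apply He.
  - apply ex_RInt_gen_at_point. apply exRc; auto.
Qed.

Definition Sys (w1 w2 : R -> R) (A B a b : R) : Prop :=
  a < A /\ B < b /\
  RInt (fun z => (z - A) * w1 z) a b = - (B - A) * I1 w1 b /\
  RInt (fun z => (z - B) * w2 z) a b = (B - A) * I2 w2 a.

Section Abs.
Variables w1 w2 : R -> R.
Hypothesis Hc1 : forall x, continuous w1 x.
Hypothesis Hc2 : forall x, continuous w2 x.
Hypothesis Hp1 : forall x, 0 < w1 x.
Hypothesis Hp2 : forall x, 0 < w2 x.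
Hypothesis Hr : forall x y, x < y -> w1 y * w2 x < w1 x * w2 y.
Hypothesis He1 : forall y, ex_RInt_gen w1 (at_point y) (Rbar_locally p_infty).
Hypothesis He2 : forall y, ex_RInt_gen w2 (Rbar_locally m_infty) (at_point y).
Hypothesis HI1 : forall y, 0 < I1 w1 y.
Hypothesis HI2 : forall y, 0 < I2 w2 y.

Let F1 c x y : R := RInt (fun z => (z - c) * w1 z) x y.
Let F2 c x y : R := RInt (fun z => (z - c) * w2 z) x y.

Lemma final_contra a' b' X Y U V :
  a' < b' -> 0 <= Y -> X < U -> V <= Y ->
  w1 a' * Y <= w2 a' * X -> w2 b' * U <= w1 b' * V -> False.
Proof.
  intros Hab HY HXU HVY H1 H2.
  pose proof (Hr _ _ Hab) as Hr'. pose proof (Hp1 a'). pose proof (Hp1 b').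
  pose proof (Hp2 a'). pose proof (Hp2 b').
  assert (w2 b' * X < w1 b' * Y).
  { assert (w2 b' * X < w2 b' * U) by (apply Rmult_lt_compat_l; lra).
    assert (w1 b' * V <= w1 b' * Y) by (apply Rmult_le_compat_l; lra). lra. }
  assert (w2 a' * (w2 b' * X) < w2 a' * (w1 b' * Y)) by (apply Rmult_lt_compat_l; lra).
  assert (w2 b' * (w1 a' * Y) <= w2 b' * (w2 a' * X)) by (apply Rmult_le_compat_l; lra).
  assert ((w1 b' * w2 a') * Y <= (w1 a' * w2 b') * Y) by (apply Rmult_le_compat_r; lra).
  nra.
Qed.

Lemma ratio_left c a a' : a <= a' -> a' <= c ->
  w2 a' * F1 c a a' <= w1 a' * F2 c a a'.
Proof.
  intros. unfold F1, F2. apply RInt_cmp; try apply cont_lin_mul; auto.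
  intros z Hz. pose proof (Hr z a' (proj2 Hz)).
  assert (z - c <= 0). { clear -H H0 Hz. lra. } clear -H1 H2. nra.
Qed.

Lemma ratio_right c b b' : c <= b' -> b' <= b ->
  w2 b' * F1 c b' b <= w1 b' * F2 c b' b.
Proof.
  intros. unfold F1, F2. apply RInt_cmp; try apply cont_lin_mul; auto.
  intros z Hz. pose proof (Hr b' z (proj1 Hz)).
  assert (0 <= z - c). { clear -H H0 Hz. lra. } clear -H1 H2. nra.
Qed.

Lemma F1_nonpos c x y : x <= y -> y <= c -> F1 c x y <= 0.
Proof. intros. apply RInt_nonpos; try apply cont_lin_mul; auto. intros z Hz. pose proof (Hp1 z). nra. Qed.
Lemma F2_nonpos c x y : x <= y -> y <= c -> F2 c x y <= 0.
Proof. intros. apply RInt_nonpos; try apply cont_lin_mul; auto. intros z Hz. pose proof (Hp2 z). nra. Qed.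
Lemma F1_nonneg c x y : x <= y -> c <= x -> 0 <= F1 c x y.
Proof. intros. apply RInt_nonneg; try apply cont_lin_mul; auto. intros z Hz. pose proof (Hp1 z). nra. Qed.
Lemma F2_nonneg c x y : x <= y -> c <= x -> 0 <= F2 c x y.
Proof. intros. apply RInt_nonneg; try apply cont_lin_mul; auto. intros z Hz. pose proof (Hp2 z). nra. Qed.

Lemma F1_swap c x y : F1 c y x = - F1 c x y.
Proof. apply RInt_swap'. apply cont_lin_mul; auto. Qed.
Lemma F2_swap c x y : F2 c y x = - F2 c x y.
Proof. apply RInt_swap'. apply cont_lin_mul; auto. Qed.


Lemma chasF1 c x y u : F1 c x y = F1 c x u + F1 c u y.
Proof. apply RInt_chas3. apply cont_lin_mul; auto. Qed.
Lemma chasF2 c x y u : F2 c x y = F2 c x u + F2 c u y.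
Proof. apply RInt_chas3. apply cont_lin_mul; auto. Qed.
Lemma chasW1 x y u : RInt w1 x y = RInt w1 x u + RInt w1 u y.
Proof. apply RInt_chas3. auto. Qed.
Lemma chasW2 x y u : RInt w2 x y = RInt w2 x u + RInt w2 u y.
Proof. apply RInt_chas3. auto. Qed.
Lemma shF1 c c' x y : F1 c' x y = F1 c x y + (c - c') * RInt w1 x y.
Proof. apply RInt_shift. auto. Qed.
Lemma shF2 c c' x y : F2 c' x y = F2 c x y + (c - c') * RInt w2 x y.
Proof. apply RInt_shift. auto. Qed.

Lemma scen_c2 A B B' a b a' b' : A < B -> B < B' ->
  Sys w1 w2 A B a b -> Sys w1 w2 A B' a' b' -> a' < a /\ b < b'.
Proof.
  intros hAB hBB' [ha [hb [E1 E2]]] [ha' [hb' [E1' E2']]].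
  fold (F1 A a b) in E1. fold (F1 A a' b') in E1'.
  fold (F2 B a b) in E2. fold (F2 B' a' b') in E2'.
  assert (Hi : -(B' - B) * I1 w1 b' = - F1 A a a' + F1 B b b').
  { pose proof (chasF1 A a' b' a) as C1. rewrite (chasF1 A a b' b) in C1.
    rewrite (F1_swap A a a') in C1.
    pose proof (I1_chas w1 Hc1 He1 b b') as I1c.
    pose proof (shF1 B A b b') as SH.
    rewrite I1c in E1. nra. }
  assert (Hii : F2 B b b' = (B' - B) * I2 w2 b' + F2 A a a').
  { pose proof (shF2 B B' a' b') as SH2.
    pose proof (chasF2 B a' b' a) as C2. rewrite (chasF2 B a b' b) in C2.
    rewrite (F2_swap B a a') in C2.
    pose proof (shF2 A B a a') as SH2'.
    pose proof (I2_chas w2 Hc2 He2 a a') as I2c.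
    pose proof (I2_chas w2 Hc2 He2 a b') as I2c'.
    pose proof (chasW2 a' b' a) as CW. rewrite (RInt_swap' w2 Hc2 a a') in CW.
    rewrite I2c in E2'. rewrite I2c'. nra. }
  pose proof (HI1 b') as P1. pose proof (HI2 b') as P2.
  assert (Q1 : 0 < (B' - B) * I1 w1 b') by (apply Rmult_lt_0_compat; lra).
  assert (Q2 : 0 < (B' - B) * I2 w2 b') by (apply Rmult_lt_0_compat; lra).
  assert (Step1 : a' < a).
  { destruct (Rlt_or_le a' a) as [h|h]; [exact h|exfalso].
    destruct (Rlt_or_le b' b) as [hb2|hb2].
    -
      pose proof (ratio_left A a a' h (Rlt_le _ _ ha')) as RL.
      pose proof (ratio_right B b b' (Rlt_le _ _ (Rlt_trans _ _ _ hBB' hb')) (Rlt_le _ _ hb2)) as RR.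
      pose proof (F1_swap B b' b) as S1. pose proof (F2_swap B b' b) as S2.
      pose proof (F2_nonpos A a a' h (Rlt_le _ _ ha')) as N2.
      apply (final_contra a' b' (- F1 A a a') (- F2 A a a') (F1 B b' b) (F2 B b' b)); try lra.
    -
      pose proof (F1_nonpos A a a' h (Rlt_le _ _ ha')) as N1.
      pose proof (F1_nonneg B b b' hb2 (Rlt_le _ _ hb)) as N2. lra. }
  split; [exact Step1|].
  destruct (Rlt_or_le b b') as [h|h]; [exact h|exfalso].
  pose proof (F2_nonneg B b' b h (Rlt_le _ _ (Rlt_trans _ _ _ hBB' hb'))) as N1.
  rewrite (F2_swap B b b') in N1.
  pose proof (F2_nonpos A a' a (Rlt_le _ _ Step1) (Rlt_le _ _ ha)) as N2.
  rewrite (F2_swap A a a') in N2. lra.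
Qed.


Lemma scen_c1 A A' B a b a' b' : A' < A -> A < B ->
  Sys w1 w2 A B a b -> Sys w1 w2 A' B a' b' -> a' < a /\ b < b'.
Proof.
  intros hAA' hAB [ha [hb [E1 E2]]] [ha' [hb' [E1' E2']]].
  fold (F1 A a b) in E1. fold (F1 A' a' b') in E1'.
  fold (F2 B a b) in E2. fold (F2 B a' b') in E2'.
  assert (Hii : F2 B b b' = (A - A') * I2 w2 a' + F2 A a a').
  { pose proof (chasF2 B a' b' a) as C2. rewrite (chasF2 B a b' b) in C2.
    rewrite (F2_swap B a a') in C2.
    pose proof (shF2 A B a a') as SH.
    pose proof (I2_chas w2 Hc2 He2 a a') as I2c.
    rewrite I2c in E2'. nra. }
  assert (Hi : F1 B b b' - F1 A a a' = - (A - A') * I1 w1 a').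
  { pose proof (shF1 A A' a' b') as SH.
    pose proof (chasF1 A a' b' a) as C. rewrite (chasF1 A a b' b) in C.
    rewrite (F1_swap A a a') in C.
    pose proof (I1_chas w1 Hc1 He1 b b') as I1c.
    pose proof (I1_chas w1 Hc1 He1 a' b') as I1c'.
    pose proof (shF1 B A b b') as SH1.
    rewrite I1c in E1. rewrite I1c'. nra. }
  pose proof (HI1 a') as P1. pose proof (HI2 a') as P2.
  assert (Q1 : 0 < (A - A') * I1 w1 a') by (apply Rmult_lt_0_compat; lra).
  assert (Q2 : 0 < (A - A') * I2 w2 a') by (apply Rmult_lt_0_compat; lra).
  assert (Step1 : b < b').
  { destruct (Rlt_or_le b b') as [h|h]; [exact h|exfalso].
    destruct (Rlt_or_le a a') as [ha2|ha2].
    - pose proof (ratio_left A a a' (Rlt_le _ _ ha2) (Rlt_le _ _ (Rlt_trans _ _ _ ha' hAA'))) as RL.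
      pose proof (ratio_right B b b' (Rlt_le _ _ hb') h) as RR.
      pose proof (F1_swap B b' b) as S1. pose proof (F2_swap B b' b) as S2.
      pose proof (F2_nonpos A a a' (Rlt_le _ _ ha2) (Rlt_le _ _ (Rlt_trans _ _ _ ha' hAA'))) as N2.
      apply (final_contra a' b' (- F1 A a a') (- F2 A a a') (F1 B b' b) (F2 B b' b)); try lra.
    - pose proof (F2_nonneg B b' b h (Rlt_le _ _ hb')) as N1.
      rewrite (F2_swap B b b') in N1.
      pose proof (F2_nonpos A a' a ha2 (Rlt_le _ _ ha)) as N2.
      rewrite (F2_swap A a a') in N2. lra. }
  split; [|exact Step1].
  destruct (Rlt_or_le a' a) as [h|h]; [exact h|exfalso].
  pose proof (F1_nonneg B b b' (Rlt_le _ _ Step1) (Rlt_le _ _ hb)) as N1.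
  pose proof (F1_nonpos A a a' h (Rlt_le _ _ (Rlt_trans _ _ _ ha' hAA'))) as N2.
  lra.
Qed.

End Abs.


Lemma ball_R (x y e : R) : Rabs (y - x) < e -> ball x e y.
Proof. intros H. unfold ball; simpl. unfold AbsRing_ball, abs, minus, plus, opp; simpl. exact H. Qed.

Lemma RInt_mono_up (f : R -> R) (Hc : forall x, continuous f x) a x y :
  (forall t, a <= t -> 0 <= f t) -> a <= x -> x <= y -> RInt f a x <= RInt f a y.
Proof.
  intros Hp Hax Hxy. rewrite (RInt_chas3 f Hc a x y).
  assert (0 <= RInt f x y). { apply RInt_nonneg; auto. intros z Hz; apply Hp; lra. }
  lra.
Qed.

Lemma RInt_mono_dn (f : R -> R) (Hc : forall x, continuous f x) a x y :
  (forall t, t <= a -> 0 <= f t) -> x <= a -> y <= x -> RInt f x a <= RInt f y a.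
Proof.
  intros Hp Hax Hxy. rewrite (RInt_chas3 f Hc y x a).
  assert (0 <= RInt f y x). { apply RInt_nonneg; auto. intros z Hz; apply Hp; lra. }
  lra.
Qed.

Lemma GL_p (f : R -> R) a M : (forall x, continuous f x) ->
  (forall t, a <= t -> 0 <= f t) -> (forall x, a <= x -> RInt f a x <= M) ->
  exists L, is_RInt_gen f (at_point a) (Rbar_locally p_infty) L /\
            forall x, a <= x -> RInt f a x <= L.
Proof.
  intros Hc Hp HM.
  set (E := fun v => exists x, a <= x /\ v = RInt f a x).
  assert (Hb : bound E). { exists M. intros v [x [hx ->]]. auto. }
  assert (Hne : exists v, E v). { exists (RInt f a a). exists a. split; [lra|auto]. }
  destruct (completeness E Hb Hne) as [L [HL1 HL2]].
  exists L. split.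
  2:{ intros x hx. apply HL1. exists x; split; auto. }
  intros P [eps HP].
  destruct (classic (exists v, E v /\ L - eps < v)) as [[v [[x0 [hx0 ->]] hv]]|hn].
  2:{ exfalso. assert (L <= L - eps).
      { apply HL2. intros v hv. destruct (Rle_or_lt v (L - eps)) as [h|h]; auto.
        exfalso; apply hn; exists v; split; auto. }
      destruct eps; simpl in *; lra. }
  apply (Filter_prod _ _ _ (fun u => u = a) (fun v => x0 < v)).
  - reflexivity.
  - exists x0. auto.
  - intros u v -> hv0. simpl. exists (RInt f a v). split.
    + apply (RInt_correct (V:=R_CompleteNormedModule)). apply exRc; auto.
    + apply HP. apply ball_R.
      assert (RInt f a x0 <= RInt f a v) by (apply RInt_mono_up; auto; lra).
      assert (RInt f a v <= L). { apply HL1. exists v; split; auto; lra. }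
      apply Rabs_def1; lra.
Qed.

Lemma GL_m (f : R -> R) a M : (forall x, continuous f x) ->
  (forall t, t <= a -> 0 <= f t) -> (forall x, x <= a -> RInt f x a <= M) ->
  exists L, is_RInt_gen f (Rbar_locally m_infty) (at_point a) L /\
            forall x, x <= a -> RInt f x a <= L.
Proof.
  intros Hc Hp HM.
  set (E := fun v => exists x, x <= a /\ v = RInt f x a).
  assert (Hb : bound E). { exists M. intros v [x [hx ->]]. auto. }
  assert (Hne : exists v, E v). { exists (RInt f a a). exists a. split; [lra|auto]. }
  destruct (completeness E Hb Hne) as [L [HL1 HL2]].
  exists L. split.
  2:{ intros x hx. apply HL1. exists x; split; auto. }
  intros P [eps HP].
  destruct (classic (exists v, E v /\ L - eps < v)) as [[v [[x0 [hx0 ->]] hv]]|hn].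
  2:{ exfalso. assert (L <= L - eps).
      { apply HL2. intros v hv. destruct (Rle_or_lt v (L - eps)) as [h|h]; auto.
        exfalso; apply hn; exists v; split; auto. }
      destruct eps; simpl in *; lra. }
  apply (Filter_prod _ _ _ (fun u => u < x0) (fun v => v = a)).
  - exists x0. auto.
  - reflexivity.
  - intros u v hu0 ->. simpl. exists (RInt f u a). split.
    + apply (RInt_correct (V:=R_CompleteNormedModule)). apply exRc; auto.
    + apply HP. apply ball_R.
      assert (RInt f x0 a <= RInt f u a) by (apply RInt_mono_dn; auto; lra).
      assert (RInt f u a <= L). { apply HL1. exists u; split; auto; lra. }
      apply Rabs_def1; lra.
Qed.

Lemma exd_cont (f : R -> R) x : ex_derive f x -> continuous f x.
Proof. apply (@ex_derive_continuous R_AbsRing R_NormedModule). Qed.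

Lemma cont_expl (l : R) x : continuous (fun t => exp (- (l * t))) x.
Proof. apply exd_cont. auto_derive. auto. Qed.
Lemma cont_expr (l : R) x : continuous (fun t => exp (l * t)) x.
Proof. apply exd_cont. auto_derive. auto. Qed.

Lemma RInt_expn (l a x : R) : 0 < l ->
  RInt (fun t => exp (- (l * t))) a x = (exp (- (l * a)) - exp (- (l * x))) / l.
Proof.
  intros hl.
  apply is_RInt_unique.
  replace ((exp (- (l * a)) - exp (- (l * x))) / l) with
     (minus ((fun t => - exp (- (l * t)) / l) x) ((fun t => - exp (- (l * t)) / l) a)).
  2:{ unfold minus, plus, opp; simpl. field. lra. }
  apply (is_RInt_derive (V:=R_CompleteNormedModule) (fun t => - exp (- (l * t)) / l)).
  - intros t _. auto_derive; auto. field. lra.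
  - intros t _. exact (cont_expl l t).
Qed.

Lemma RInt_expp (l a x : R) : 0 < l ->
  RInt (fun t => exp (l * t)) x a = (exp (l * a) - exp (l * x)) / l.
Proof.
  intros hl.
  apply is_RInt_unique.
  replace ((exp (l * a) - exp (l * x)) / l) with
     (minus ((fun t => exp (l * t) / l) a) ((fun t => exp (l * t) / l) x)).
  2:{ unfold minus, plus, opp; simpl. field. lra. }
  apply (is_RInt_derive (V:=R_CompleteNormedModule) (fun t => exp (l * t) / l)).
  - intros t _. auto_derive; auto. field. lra.
  - intros t _. exact (cont_expr l t).
Qed.


Lemma GLe_p (f : R -> R) a K l : 0 < l -> (forall x, continuous f x) ->
  (forall t, a <= t -> 0 <= f t <= K * exp (- (l * t))) ->
  exists L, is_RInt_gen f (at_point a) (Rbar_locally p_infty) L /\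
            forall x, a <= x -> RInt f a x <= L.
Proof.
  intros hl Hc Hb. apply (GL_p f a (K * (exp (- (l * a)) / l))); auto.
  - intros t ht; apply Hb; auto.
  - intros x hx.
    assert (H1 : 1 * RInt f a x <= K * RInt (fun t => exp (- (l * t))) a x).
    { apply RInt_cmp; auto. intros; apply cont_expl. intros z hz. specialize (Hb z ltac:(lra)). lra. }
    rewrite RInt_expn in H1; auto.
    assert (0 <= K). { specialize (Hb a ltac:(lra)). pose proof (exp_pos (- (l * a))). nra. }
    assert ((exp (- (l * a)) - exp (- (l * x))) / l <= exp (- (l * a)) / l).
    { unfold Rdiv. apply Rmult_le_compat_r. left; apply Rinv_0_lt_compat; auto.
      pose proof (exp_pos (- (l * x))). lra. }
    assert (K * ((exp (- (l * a)) - exp (- (l * x))) / l) <= K * (exp (- (l * a)) / l)) by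
      (apply Rmult_le_compat_l; auto).
    lra.
Qed.

Lemma GLe_m (f : R -> R) a K l : 0 < l -> (forall x, continuous f x) ->
  (forall t, t <= a -> 0 <= f t <= K * exp (l * t)) ->
  exists L, is_RInt_gen f (Rbar_locally m_infty) (at_point a) L /\
            forall x, x <= a -> RInt f x a <= L.
Proof.
  intros hl Hc Hb. apply (GL_m f a (K * (exp (l * a) / l))); auto.
  - intros t ht; apply Hb; auto.
  - intros x hx.
    assert (H1 : 1 * RInt f x a <= K * RInt (fun t => exp (l * t)) x a).
    { apply RInt_cmp; auto. intros; apply cont_expr. intros z hz. specialize (Hb z ltac:(lra)). lra. }
    rewrite RInt_expp in H1; auto.
    assert (0 <= K). { specialize (Hb a ltac:(lra)). pose proof (exp_pos (l * a)). nra. }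
    assert ((exp (l * a) - exp (l * x)) / l <= exp (l * a) / l).
    { unfold Rdiv. apply Rmult_le_compat_r. left; apply Rinv_0_lt_compat; auto.
      pose proof (exp_pos (l * x)). lra. }
    assert (K * ((exp (l * a) - exp (l * x)) / l) <= K * (exp (l * a) / l)) by
      (apply Rmult_le_compat_l; auto).
    lra.
Qed.


Lemma exp_le' x y : x <= y -> exp x <= exp y.
Proof. intros [h|h]. left; apply exp_increasing; auto. subst; lra. Qed.

Lemma ln_le_lin x : 0 < x -> ln x <= x - 1.
Proof. intros hx. pose proof (exp_ineq1_le (ln x)). rewrite exp_ln in H; auto. lra. Qed.

Lemma ball_le_R (x e y : R) : ball x e y -> Rabs (y - x) < e.
Proof. intros H. unfold ball in H; simpl in H. unfold AbsRing_ball, abs, minus, plus, opp in H; simpl in H. exact H. Qed.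

Definition pw (b t : R) : R := if Rle_dec t 0 then 0 else Rpower t b.

Lemma pw_pos b t : 0 < t -> 0 < pw b t.
Proof. intros. unfold pw. destruct (Rle_dec t 0). lra. unfold Rpower; apply exp_pos. Qed.
Lemma pw_nonneg b t : 0 <= pw b t.
Proof. unfold pw. destruct (Rle_dec t 0). lra. unfold Rpower; left; apply exp_pos. Qed.
Lemma pw_eq b t : 0 < t -> pw b t = Rpower t b.
Proof. intros. unfold pw. destruct (Rle_dec t 0). lra. auto. Qed.

Lemma pw_cont b t : 0 < b -> continuous (pw b) t.
Proof.
  intros hb. destruct (Rlt_or_le 0 t) as [ht|ht].
  - apply (continuous_ext_loc _ (fun y => exp (b * ln y))).
    + exists (mkposreal t ht). intros y hy. apply ball_le_R in hy.
      simpl in hy. rewrite pw_eq. reflexivity. apply Rabs_def2 in hy. lra.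
    + apply exd_cont. auto_derive. auto.
  - destruct ht as [ht|ht].
    + apply (continuous_ext_loc _ (fun _ => 0)).
      * assert (hp : 0 < - t) by lra. exists (mkposreal _ hp). intros y hy.
        apply ball_le_R in hy. simpl in hy. apply Rabs_def2 in hy.
        unfold pw. destruct (Rle_dec y 0). auto. lra.
      * apply continuous_const.
    + subst t. unfold continuous. apply filterlim_locally. intros eps.
      assert (hd : 0 < exp (ln eps / b)) by apply exp_pos.
      exists (mkposreal _ hd). intros y hy. apply ball_le_R in hy. simpl in hy.
      apply ball_R. unfold pw at 2. destruct (Rle_dec 0 0); [|lra].
      unfold pw. destruct (Rle_dec y 0).
      * rewrite Rminus_0_r, Rabs_R0. apply cond_pos.
      * rewrite Rminus_0_r. unfold Rpower. rewrite Rabs_pos_eq by (left; apply exp_pos).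
        apply Rabs_def2 in hy. rewrite Rminus_0_r in hy.
        assert (ln y < ln eps / b).
        { rewrite <- (ln_exp (ln eps / b)). apply ln_increasing; lra. }
        rewrite <- (exp_ln eps) by apply cond_pos. apply exp_increasing.
        apply (Rmult_lt_compat_l b) in H; auto. unfold Rdiv in H.
        replace (b * (ln eps * / b)) with (ln eps) in H by (field; lra). lra.
Qed.

Lemma pw_bound b t : 0 < b -> 0 <= t -> pw b t <= exp (b * (ln (4 * b) - 1)) * exp (t / 4).
Proof.
  intros hb [ht|ht].
  - rewrite pw_eq by auto. unfold Rpower. rewrite <- exp_plus. apply exp_le'.
    assert (E : t = (4 * b) * (t / (4 * b))) by (field; lra).
    assert (hq : 0 < t / (4 * b)) by (apply Rdiv_lt_0_compat; lra).
    rewrite E at 1. rewrite ln_mult by lra.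
    pose proof (ln_le_lin _ hq).
    assert (b * ln (t / (4 * b)) <= b * (t / (4 * b) - 1)) by (apply Rmult_le_compat_l; lra).
    assert (b * (t / (4 * b) - 1) = t / 4 - b) by (field; lra). nra.
  - subst. unfold pw. destruct (Rle_dec 0 0); [|lra].
    pose proof (exp_pos (b * (ln (4 * b) - 1))). pose proof (exp_pos (0/4)). nra.
Qed.

Definition hJ (b y t : R) : R := pw b t * exp (- t ^ 2 / 2 - y * t).

Lemma hJ_cont b y t : 0 < b -> continuous (hJ b y) t.
Proof.
  intros hb. apply (continuous_mult (pw b) (fun t => exp (- t ^ 2 / 2 - y * t))).
  apply pw_cont; auto. apply exd_cont. auto_derive. auto.
Qed.

Lemma hJ_nonneg b y t : 0 <= hJ b y t.
Proof. unfold hJ. pose proof (pw_nonneg b t). pose proof (exp_pos (- t ^ 2 / 2 - y * t)). nra. Qed.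
Lemma hJ_pos b y t : 0 < t -> 0 < hJ b y t.
Proof. intros. unfold hJ. pose proof (pw_pos b t H). pose proof (exp_pos (- t ^ 2 / 2 - y * t)). nra. Qed.

Lemma hJ_bound b y t : 0 < b -> 0 <= t ->
  hJ b y t <= (exp (b * (ln (4 * b) - 1)) * exp ((5/4 - y) ^ 2 / 2)) * exp (- (1 * t)).
Proof.
  intros hb ht. unfold hJ.
  pose proof (pw_bound b t hb ht).
  pose proof (pw_nonneg b t).
  pose proof (exp_pos (- t ^ 2 / 2 - y * t)).
  apply Rle_trans with (exp (b * (ln (4 * b) - 1)) * exp (t / 4) * exp (- t ^ 2 / 2 - y * t)).
  apply Rmult_le_compat_r; lra.
  rewrite !Rmult_assoc. apply Rmult_le_compat_l. left; apply exp_pos.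
  rewrite <- !exp_plus. apply exp_le'. pose proof (pow2_ge_0 (t - (5/4 - y))). nra.
Qed.

Lemma J_ex b y : 0 < b -> exists L, is_RInt_gen (hJ b y) (at_point 0) (Rbar_locally p_infty) L /\
            forall x, 0 <= x -> RInt (hJ b y) 0 x <= L.
Proof.
  intros hb. apply (GLe_p _ 0 (exp (b * (ln (4 * b) - 1)) * exp ((5/4 - y) ^ 2 / 2)) 1); try lra.
  intros; apply hJ_cont; auto.
  intros t ht. split. apply hJ_nonneg. apply hJ_bound; auto.
Qed.

Definition Jc (b y : R) : R := RInt_gen (hJ b y) (at_point 0) (Rbar_locally p_infty).

Lemma Jc_is b y : 0 < b -> is_RInt_gen (hJ b y) (at_point 0) (Rbar_locally p_infty) (Jc b y).
Proof.
  intros hb. destruct (J_ex b y hb) as [L [HL _]].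
  unfold Jc. rewrite (is_RInt_gen_unique _ L HL). auto.
Qed.

Lemma Jc_pos b y : 0 < b -> 0 < Jc b y.
Proof.
  intros hb. destruct (J_ex b y hb) as [L [HL HL2]].
  unfold Jc. rewrite (is_RInt_gen_unique _ L HL).
  specialize (HL2 1 ltac:(lra)).
  assert (0 < RInt (hJ b y) 0 1).
  { apply RInt_gt_0. lra. intros; apply hJ_pos; lra. intros; apply hJ_cont; auto. }
  lra.
Qed.


Lemma Jc_mono b y1 y2 : 0 < b -> y1 < y2 -> Jc b y2 < Jc b y1.
Proof.
  intros hb hy.
  set (d := fun t => minus (hJ b y1 t) (hJ b y2 t)).
  assert (Hd : is_RInt_gen d (at_point 0) (Rbar_locally p_infty) (minus (Jc b y1) (Jc b y2))).
  { apply (is_RInt_gen_minus (V:=R_NormedModule) (Fa:=at_point 0) (Fb:=Rbar_locally p_infty) (hJ b y1) (hJ b y2)); apply Jc_is; auto. }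
  assert (hdc : forall x, continuous d x).
  { intros x. apply (continuous_minus (hJ b y1) (hJ b y2)); apply hJ_cont; auto. }
  assert (hdp : forall t, 0 < t -> 0 < d t).
  { intros t ht. unfold d, minus, plus, opp; simpl. unfold hJ.
    pose proof (pw_pos b t ht).
    assert (y1 * t < y2 * t) by (apply Rmult_lt_compat_r; lra).
    assert (exp (- t ^ 2 / 2 - y2 * t) < exp (- t ^ 2 / 2 - y1 * t)) by (apply exp_increasing; lra).
    assert (pw b t * exp (- t ^ 2 / 2 - y2 * t) < pw b t * exp (- t ^ 2 / 2 - y1 * t)) by (apply Rmult_lt_compat_l; lra).
    lra. }
  destruct (GLe_p d 0 (exp (b * (ln (4 * b) - 1)) * exp ((5/4 - y1) ^ 2 / 2)) 1) as [L [HL HL2]]; auto; try lra.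
  { intros t ht. split.
    - destruct ht as [ht|ht]. left; apply hdp; auto. subst. unfold d, minus, plus, opp, hJ, pw; simpl.
      destruct (Rle_dec 0 0); [|lra]. lra.
    - apply Rle_trans with (hJ b y1 t). unfold d, minus, plus, opp; simpl. pose proof (hJ_nonneg b y2 t). lra.
      apply hJ_bound; auto. }
  pose proof (is_RInt_gen_unique _ _ HL) as U1.
  pose proof (is_RInt_gen_unique _ _ Hd) as U2.
  rewrite U1 in U2. unfold minus, plus, opp in U2; simpl in U2.
  specialize (HL2 1 ltac:(lra)).
  assert (0 < RInt d 0 1). { apply RInt_gt_0. lra. intros; apply hdp; lra. intros; apply hdc. }
  lra.
Qed.

Lemma Jc_mono_le b y1 y2 : 0 < b -> y1 <= y2 -> Jc b y2 <= Jc b y1.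
Proof. intros hb [h|h]. left; apply Jc_mono; auto. subst; lra. Qed.

Lemma exp_diff u v : Rabs (exp u - exp v) <= Rabs (u - v) * exp (Rmax u v).
Proof.
  assert (K : forall u v, u <= v -> exp v - exp u <= (v - u) * exp v).
  { intros p q hpq. pose proof (exp_ineq1_le (p - q)).
    replace (exp p) with (exp q * exp (p - q)) by (rewrite <- exp_plus; f_equal; ring).
    pose proof (exp_pos q). nra. }
  destruct (Rle_or_lt u v) as [h|h].
  - rewrite Rmax_right by auto. rewrite Rabs_left1.
    rewrite Rabs_left1 by lra. specialize (K u v h). lra.
    assert (exp u <= exp v) by (apply exp_le'; auto). lra.
  - rewrite Rmax_left by lra. rewrite Rabs_pos_eq.
    rewrite Rabs_pos_eq by lra. specialize (K v u (Rlt_le _ _ h)). lra.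
    assert (exp v <= exp u) by (apply exp_le'; lra). lra.
Qed.

Lemma hJ_lip b y y0 t : 0 <= t -> Rabs (y - y0) <= 1 ->
  Rabs (hJ b y t - hJ b y0 t) <= Rabs (y - y0) * hJ b (- (Rabs y0 + 2)) t.
Proof.
  intros ht hy. unfold hJ.
  replace (pw b t * exp (- t ^ 2 / 2 - y * t) - pw b t * exp (- t ^ 2 / 2 - y0 * t))
    with (pw b t * (exp (- t ^ 2 / 2 - y * t) - exp (- t ^ 2 / 2 - y0 * t))) by ring.
  rewrite Rabs_mult. rewrite (Rabs_pos_eq (pw b t)) by apply pw_nonneg.
  pose proof (pw_nonneg b t).
  pose proof (exp_diff (- t ^ 2 / 2 - y * t) (- t ^ 2 / 2 - y0 * t)) as ED.
  replace (- t ^ 2 / 2 - y * t - (- t ^ 2 / 2 - y0 * t)) with (- ((y - y0) * t)) in ED by ring.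
  rewrite Rabs_Ropp, Rabs_mult, (Rabs_pos_eq t) in ED by auto.
  assert (Hm : Rmax (- t ^ 2 / 2 - y * t) (- t ^ 2 / 2 - y0 * t) <= - t ^ 2 / 2 + (Rabs y0 + 1) * t).
  { assert (Rabs y <= Rabs y0 + 1).
    { replace y with (y0 + (y - y0)) by ring. pose proof (Rabs_triang y0 (y - y0)). lra. }
    assert (- y <= Rabs y) by (rewrite <- Rabs_Ropp; apply Rle_abs).
    assert (- y0 <= Rabs y0) by (rewrite <- Rabs_Ropp; apply Rle_abs).
    apply Rmax_lub; nra. }
  apply exp_le' in Hm.
  assert (Ht : t <= exp t) by (pose proof (exp_ineq1_le t); lra).
  assert (E2 : exp (- t ^ 2 / 2 - - (Rabs y0 + 2) * t) = exp t * exp (- t ^ 2 / 2 + (Rabs y0 + 1) * t)).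
  { rewrite <- exp_plus. f_equal. ring. }
  rewrite E2.
  pose proof (Rabs_pos (y - y0)).
  pose proof (exp_pos (- t ^ 2 / 2 + (Rabs y0 + 1) * t)).
  pose proof (exp_pos (Rmax (- t ^ 2 / 2 - y * t) (- t ^ 2 / 2 - y0 * t))).
  assert (Rabs (y - y0) * t * exp (Rmax (- t ^ 2 / 2 - y * t) (- t ^ 2 / 2 - y0 * t))
          <= Rabs (y - y0) * (exp t * exp (- t ^ 2 / 2 + (Rabs y0 + 1) * t))).
  { rewrite Rmult_assoc. apply Rmult_le_compat_l; auto.
    apply Rmult_le_compat; lra. }
  assert (pw b t * Rabs (exp (- t ^ 2 / 2 - y * t) - exp (- t ^ 2 / 2 - y0 * t)) <=
          pw b t * (Rabs (y - y0) * (exp t * exp (- t ^ 2 / 2 + (Rabs y0 + 1) * t)))).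
  { apply Rmult_le_compat_l; auto. lra. }
  lra.
Qed.

Lemma Jc_lip b y y0 : 0 < b -> Rabs (y - y0) <= 1 ->
  Rabs (Jc b y - Jc b y0) <= Rabs (y - y0) * Jc b (- (Rabs y0 + 2)).
Proof.
  intros hb hy.
  assert (Hd : is_RInt_gen (fun t => minus (hJ b y t) (hJ b y0 t)) (at_point 0) (Rbar_locally p_infty) (minus (Jc b y) (Jc b y0))).
  { apply (is_RInt_gen_minus (V:=R_NormedModule) (Fa:=at_point 0) (Fb:=Rbar_locally p_infty) (hJ b y) (hJ b y0)); apply Jc_is; auto. }
  assert (Hg : is_RInt_gen (fun t => scal (Rabs (y - y0)) (hJ b (- (Rabs y0 + 2)) t)) (at_point 0) (Rbar_locally p_infty) (scal (Rabs (y - y0)) (Jc b (- (Rabs y0 + 2))))).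
  { apply (is_RInt_gen_scal (V:=R_NormedModule) (Fa:=at_point 0) (Fb:=Rbar_locally p_infty) (hJ b (- (Rabs y0 + 2)))); apply Jc_is; auto. }
  pose proof (RInt_gen_norm (V:=R_CompleteNormedModule) (Fa := at_point 0) (Fb := Rbar_locally p_infty)
    (fun t => minus (hJ b y t) (hJ b y0 t)) (fun t => scal (Rabs (y - y0)) (hJ b (- (Rabs y0 + 2)) t))
    (minus (Jc b y) (Jc b y0)) (scal (Rabs (y - y0)) (Jc b (- (Rabs y0 + 2))))) as N.
  unfold norm, minus, plus, opp, scal in N; simpl in N; unfold abs, mult in N; simpl in N.
  apply N; auto.
  - apply (Filter_prod _ _ _ (fun u => u = 0) (fun v => 0 < v)). reflexivity. exists 0; auto.
    intros u v hu hv; simpl; lra.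
  - apply (Filter_prod _ _ _ (fun u => u = 0) (fun v => 0 < v)). reflexivity. exists 0; auto.
    intros u v hu hv; simpl. intros x hx. apply hJ_lip; auto. lra.
Qed.

Lemma Jc_cont b y0 : 0 < b -> continuous (Jc b) y0.
Proof.
  intros hb. unfold continuous. apply filterlim_locally. intros eps.
  set (K := Jc b (- (Rabs y0 + 2))).
  assert (hK : 0 < K) by (apply Jc_pos; auto).
  assert (hd : 0 < Rmin 1 (eps / (K + 1))).
  { apply Rmin_glb_lt. lra. apply Rdiv_lt_0_compat. apply cond_pos. lra. }
  exists (mkposreal _ hd). intros y hy. apply ball_le_R in hy. simpl in hy.
  apply ball_R.
  assert (h1 : Rabs (y - y0) <= 1) by (pose proof (Rmin_l 1 (eps / (K + 1))); lra).
  pose proof (Jc_lip b y y0 hb h1) as L. fold K in L.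
  assert (h2 : Rabs (y - y0) < eps / (K + 1)) by (pose proof (Rmin_r 1 (eps / (K + 1))); lra).
  assert (Rabs (y - y0) * K <= eps / (K + 1) * K) by (apply Rmult_le_compat_r; lra).
  assert (eps / (K + 1) * K < eps).
  { unfold Rdiv. rewrite Rmult_assoc. rewrite <- (Rmult_1_r eps) at 2. apply Rmult_lt_compat_l. apply cond_pos.
    apply (Rmult_lt_reg_l (K + 1)). lra. field_simplify; lra. }
  lra.
Qed.


Definition hG (b t : R) : R := pw b t * exp (- t).

Lemma hG_cont b t : 0 < b -> continuous (hG b) t.
Proof.
  intros hb. apply (continuous_mult (pw b) (fun t => exp (- t))).
  apply pw_cont; auto. apply exd_cont. auto_derive. auto.
Qed.

Lemma hG_bound b t : 0 < b -> 0 <= t ->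
  0 <= hG b t <= exp (b * (ln (4 * b) - 1)) * exp (- (3/4 * t)).
Proof.
  intros hb ht. unfold hG. pose proof (pw_bound b t hb ht). pose proof (pw_nonneg b t).
  pose proof (exp_pos (- t)). split. nra.
  apply Rle_trans with (exp (b * (ln (4 * b) - 1)) * exp (t / 4) * exp (- t)).
  apply Rmult_le_compat_r; lra.
  rewrite Rmult_assoc. apply Rmult_le_compat_l. left; apply exp_pos.
  rewrite <- exp_plus. apply exp_le'. lra.
Qed.

Lemma G_ex b : 0 < b -> exists L, is_RInt_gen (hG b) (at_point 0) (Rbar_locally p_infty) L /\
            forall x, 0 <= x -> RInt (hG b) 0 x <= L.
Proof.
  intros hb. apply (GLe_p _ 0 (exp (b * (ln (4 * b) - 1))) (3/4)); try lra.
  intros; apply hG_cont; auto.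
  intros t ht. apply hG_bound; auto.
Qed.

Lemma int0_eq (f g : R -> R) : (forall t, 0 < t -> f t = g t) ->
  ex_RInt_gen f (at_point 0) (Rbar_locally p_infty) ->
  RInt_gen f (at_point 0) (Rbar_locally p_infty) = int_0_inf g.
Proof.
  intros H He. unfold int_0_inf. apply RInt_gen_ext; auto.
  apply (Filter_prod _ _ _ (fun u => u = 0) (fun v => 0 < v)). reflexivity. exists 0; auto.
  intros u v hu hv x hx. simpl in hx. subst u. rewrite Rmin_left in hx by lra. apply H. lra.
Qed.

Lemma Gamma_eq s : 0 < s - 1 ->
  Gamma_fn s = RInt_gen (hG (s - 1)) (at_point 0) (Rbar_locally p_infty).
Proof.
  intros hb. unfold Gamma_fn. symmetry. apply int0_eq.
  intros t ht. unfold hG. rewrite pw_eq; auto.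
  destruct (G_ex _ hb) as [L [HL _]]. exists L; auto.
Qed.

Lemma Gamma_pos s : 0 < s - 1 -> 0 < Gamma_fn s.
Proof.
  intros hb. rewrite Gamma_eq; auto.
  destruct (G_ex _ hb) as [L [HL HL2]]. rewrite (is_RInt_gen_unique _ L HL).
  specialize (HL2 1 ltac:(lra)).
  assert (0 < RInt (hG (s - 1)) 0 1).
  { apply RInt_gt_0. lra. intros x hx. unfold hG. pose proof (pw_pos (s - 1) x ltac:(lra)).
    pose proof (exp_pos (- x)). nra. intros; apply hG_cont; auto. }
  lra.
Qed.

Lemma D_eq al y : 0 < - al - 1 ->
  D_pc al y = exp (- y ^ 2 / 4) / Gamma_fn (- al) * Jc (- al - 1) y.
Proof.
  intros hb. unfold D_pc. f_equal. unfold Jc. symmetry. apply int0_eq.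
  intros t ht. unfold hJ. rewrite pw_eq; auto.
  destruct (J_ex (- al - 1) y hb) as [L [HL _]]. exists L; auto.
Qed.


Section Conc.
Variables r rho m sigma : R.
Hypothesis hr : 0 < r.
Hypothesis hrho : 0 < rho.
Hypothesis hs : 0 < sigma.

Let al := - (r + rho) / rho.
Let bt := - al - 1.
Let G := Gamma_fn (- al).
Let u (x : R) := (x - m) * sqrt (2 * rho) / sigma.
Let Pn (x : R) := 2 / sigma ^ 2 / G * exp (- rho * (x - m) ^ 2 / sigma ^ 2).

Lemma bt_pos : 0 < bt.
Proof. unfold bt, al. replace (- (- (r + rho) / rho) - 1) with (r / rho) by (field; lra).
  apply Rdiv_lt_0_compat; auto. Qed.

Lemma G_pos : 0 < G.
Proof. unfold G. apply Gamma_pos. fold bt. apply bt_pos. Qed.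

Lemma KE (x : R) : exp (rho * (x - m) ^ 2 / (2 * sigma ^ 2)) * exp (- u x ^ 2 / 4) = 1.
Proof.
  rewrite <- exp_plus. rewrite <- exp_0. f_equal. unfold u.
  replace (((x - m) * sqrt (2 * rho) / sigma) ^ 2) with ((x - m) ^ 2 * (sqrt (2 * rho) * sqrt (2 * rho)) / sigma ^ 2) by (field; lra).
  rewrite sqrt_sqrt by lra. field. lra.
Qed.

Lemma KE' (x : R) : exp (rho * (x - m) ^ 2 / (2 * sigma ^ 2)) * exp (- (- u x) ^ 2 / 4) = 1.
Proof.
  replace ((- u x) ^ 2) with (u x ^ 2) by ring. apply KE.
Qed.

Lemma w1_eq x : m_hat_d rho m sigma x * phi_hat r rho m sigma x = Pn x * Jc bt (u x).
Proof.
  pose proof G_pos as hG.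
  unfold m_hat_d, phi_hat. rewrite D_eq by (apply bt_pos). fold al. fold bt. fold G.
  fold (u x). unfold Pn.
  transitivity (2 / sigma ^ 2 * exp (- rho * (x - m) ^ 2 / sigma ^ 2) *
     ((exp (rho * (x - m) ^ 2 / (2 * sigma ^ 2)) * exp (- u x ^ 2 / 4)) / G * Jc bt (u x))).
  field. lra. rewrite KE. field. lra.
Qed.

Lemma w2_eq x : m_hat_d rho m sigma x * psi_hat r rho m sigma x = Pn x * Jc bt (- u x).
Proof.
  pose proof G_pos as hG.
  unfold m_hat_d, psi_hat. rewrite D_eq by (apply bt_pos). fold al. fold bt. fold G.
  fold (u x). unfold Pn.
  transitivity (2 / sigma ^ 2 * exp (- rho * (x - m) ^ 2 / sigma ^ 2) *
     ((exp (rho * (x - m) ^ 2 / (2 * sigma ^ 2)) * exp (- (- u x) ^ 2 / 4)) / G * Jc bt (- u x))).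
  field. lra. rewrite KE'. field. lra.
Qed.


Lemma Pn_pos x : 0 < Pn x.
Proof.
  unfold Pn. pose proof G_pos. pose proof (exp_pos (- rho * (x - m) ^ 2 / sigma ^ 2)).
  assert (0 < 2 / sigma ^ 2 / G).
  { apply Rdiv_lt_0_compat; auto. apply Rdiv_lt_0_compat. lra. apply pow_lt; auto. }
  nra.
Qed.

Lemma u_lt x y : x < y -> u x < u y.
Proof.
  intros h. unfold u. unfold Rdiv. apply Rmult_lt_compat_r.
  apply Rinv_0_lt_compat; auto. apply Rmult_lt_compat_r. apply sqrt_lt_R0. lra. lra.
Qed.
Lemma u_le x y : x <= y -> u x <= u y.
Proof. intros [h|h]. left; apply u_lt; auto. subst; lra. Qed.

Lemma contQ (f : R -> R) x : (forall y, f y = Pn y * Jc bt (u y)) -> continuous f x.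
Proof.
  intros H. apply (continuous_ext (fun y => Pn y * Jc bt (u y))). intros; symmetry; auto.
  apply (continuous_mult Pn (fun y => Jc bt (u y))).
  - unfold Pn. apply exd_cont. auto_derive. auto.
  - apply (continuous_comp u (Jc bt)). unfold u. apply exd_cont. auto_derive. auto.
    apply Jc_cont. apply bt_pos.
Qed.

Lemma contQ' (f : R -> R) x : (forall y, f y = Pn y * Jc bt (- u y)) -> continuous f x.
Proof.
  intros H. apply (continuous_ext (fun y => Pn y * Jc bt (- u y))). intros; symmetry; auto.
  apply (continuous_mult Pn (fun y => Jc bt (- u y))).
  - unfold Pn. apply exd_cont. auto_derive. auto.
  - apply (continuous_comp (fun y => - u y) (Jc bt)). unfold u. apply exd_cont. auto_derive. auto.
    apply Jc_cont. apply bt_pos.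
Qed.

Lemma gauss_bound_p x : exp (- rho * (x - m) ^ 2 / sigma ^ 2) <= exp (sigma ^ 2 / (4 * rho) + m) * exp (- (1 * x)).
Proof.
  rewrite <- exp_plus. apply exp_le'.
  assert (E : sigma ^ 2 / (4 * rho) + m + - (1 * x) - (- rho * (x - m) ^ 2 / sigma ^ 2)
     = rho / sigma ^ 2 * (x - m - sigma ^ 2 / (2 * rho)) ^ 2) by (field; lra).
  assert (0 <= rho / sigma ^ 2 * (x - m - sigma ^ 2 / (2 * rho)) ^ 2).
  { apply Rmult_le_pos. left; apply Rdiv_lt_0_compat; auto; apply pow_lt; auto. apply pow2_ge_0. }
  lra.
Qed.

Lemma gauss_bound_m x : exp (- rho * (x - m) ^ 2 / sigma ^ 2) <= exp (sigma ^ 2 / (4 * rho) - m) * exp (1 * x).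
Proof.
  rewrite <- exp_plus. apply exp_le'.
  assert (E : sigma ^ 2 / (4 * rho) - m + 1 * x - (- rho * (x - m) ^ 2 / sigma ^ 2)
     = rho / sigma ^ 2 * (x - m + sigma ^ 2 / (2 * rho)) ^ 2) by (field; lra).
  assert (0 <= rho / sigma ^ 2 * (x - m + sigma ^ 2 / (2 * rho)) ^ 2).
  { apply Rmult_le_pos. left; apply Rdiv_lt_0_compat; auto; apply pow_lt; auto. apply pow2_ge_0. }
  lra.
Qed.


Let w1 := fun z => m_hat_d rho m sigma z * phi_hat r rho m sigma z.
Let w2 := fun z => m_hat_d rho m sigma z * psi_hat r rho m sigma z.

Lemma w1_cont x : continuous w1 x.
Proof. apply contQ. intros; unfold w1; apply w1_eq. Qed.
Lemma w2_cont x : continuous w2 x.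
Proof. apply contQ'. intros; unfold w2; apply w2_eq. Qed.
Lemma w1_pos x : 0 < w1 x.
Proof. unfold w1; rewrite w1_eq. pose proof (Pn_pos x). pose proof (Jc_pos bt (u x) bt_pos). nra. Qed.
Lemma w2_pos x : 0 < w2 x.
Proof. unfold w2; rewrite w2_eq. pose proof (Pn_pos x). pose proof (Jc_pos bt (- u x) bt_pos). nra. Qed.

Lemma w_ratio x y : x < y -> w1 y * w2 x < w1 x * w2 y.
Proof.
  intros h. unfold w1, w2. rewrite !w1_eq, !w2_eq.
  pose proof (u_lt x y h) as hu.
  pose proof (Jc_mono bt (u x) (u y) bt_pos hu) as J1.
  pose proof (Jc_mono bt (- u y) (- u x) bt_pos ltac:(lra)) as J2.
  pose proof (Jc_pos bt (u y) bt_pos). pose proof (Jc_pos bt (- u x) bt_pos).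
  pose proof (Pn_pos x). pose proof (Pn_pos y).
  assert (Jc bt (u y) * Jc bt (- u x) < Jc bt (u x) * Jc bt (- u y)).
  { apply Rmult_le_0_lt_compat; lra. }
  replace (Pn y * Jc bt (u y) * (Pn x * Jc bt (- u x))) with ((Pn x * Pn y) * (Jc bt (u y) * Jc bt (- u x))) by ring.
  replace (Pn x * Jc bt (u x) * (Pn y * Jc bt (- u y))) with ((Pn x * Pn y) * (Jc bt (u x) * Jc bt (- u y))) by ring.
  apply Rmult_lt_compat_l; auto. nra.
Qed.

Lemma w1_I y0 : ex_RInt_gen w1 (at_point y0) (Rbar_locally p_infty) /\ 0 < I1 w1 y0.
Proof.
  pose proof G_pos as hG.
  assert (hc : 0 < 2 / sigma ^ 2 / G).
  { apply Rdiv_lt_0_compat; auto. apply Rdiv_lt_0_compat. lra. apply pow_lt; auto. }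
  destruct (GLe_p w1 y0 (2 / sigma ^ 2 / G * Jc bt (u y0) * exp (sigma ^ 2 / (4 * rho) + m)) 1) as [L [HL HL2]]; try lra.
  - apply w1_cont.
  - intros t ht. split. left; apply w1_pos.
    unfold w1. rewrite w1_eq. unfold Pn.
    pose proof (Jc_mono_le bt (u y0) (u t) bt_pos (u_le _ _ ht)) as J1.
    pose proof (Jc_pos bt (u t) bt_pos). pose proof (Jc_pos bt (u y0) bt_pos).
    pose proof (gauss_bound_p t).
    pose proof (exp_pos (- rho * (t - m) ^ 2 / sigma ^ 2)).
    pose proof (exp_pos (sigma ^ 2 / (4 * rho) + m)). pose proof (exp_pos (- (1 * t))).
    replace (2 / sigma ^ 2 / G * Jc bt (u y0) * exp (sigma ^ 2 / (4 * rho) + m) * exp (- (1 * t)))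
      with (2 / sigma ^ 2 / G * (Jc bt (u y0) * (exp (sigma ^ 2 / (4 * rho) + m) * exp (- (1 * t))))) by ring.
    rewrite Rmult_assoc. apply Rmult_le_compat_l. lra.
    rewrite Rmult_comm. apply Rmult_le_compat; lra.
  - split. exists L; auto. unfold I1. rewrite (is_RInt_gen_unique _ L HL).
    specialize (HL2 (y0 + 1) ltac:(lra)).
    assert (0 < RInt w1 y0 (y0 + 1)).
    { apply RInt_gt_0. lra. intros; apply w1_pos. intros; apply w1_cont. }
    lra.
Qed.

Lemma w2_I y0 : ex_RInt_gen w2 (Rbar_locally m_infty) (at_point y0) /\ 0 < I2 w2 y0.
Proof.
  pose proof G_pos as hG.
  assert (hc : 0 < 2 / sigma ^ 2 / G).
  { apply Rdiv_lt_0_compat; auto. apply Rdiv_lt_0_compat. lra. apply pow_lt; auto. }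
  destruct (GLe_m w2 y0 (2 / sigma ^ 2 / G * Jc bt (- u y0) * exp (sigma ^ 2 / (4 * rho) - m)) 1) as [L [HL HL2]]; try lra.
  - apply w2_cont.
  - intros t ht. split. left; apply w2_pos.
    unfold w2. rewrite w2_eq. unfold Pn.
    pose proof (u_le _ _ ht).
    pose proof (Jc_mono_le bt (- u y0) (- u t) bt_pos ltac:(lra)) as J1.
    pose proof (Jc_pos bt (- u t) bt_pos). pose proof (Jc_pos bt (- u y0) bt_pos).
    pose proof (gauss_bound_m t).
    pose proof (exp_pos (- rho * (t - m) ^ 2 / sigma ^ 2)).
    pose proof (exp_pos (sigma ^ 2 / (4 * rho) - m)). pose proof (exp_pos (1 * t)).
    replace (2 / sigma ^ 2 / G * Jc bt (- u y0) * exp (sigma ^ 2 / (4 * rho) - m) * exp (1 * t))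
      with (2 / sigma ^ 2 / G * (Jc bt (- u y0) * (exp (sigma ^ 2 / (4 * rho) - m) * exp (1 * t)))) by ring.
    rewrite Rmult_assoc. apply Rmult_le_compat_l. lra.
    rewrite Rmult_comm. apply Rmult_le_compat; lra.
  - split. exists L; auto. unfold I2. rewrite (is_RInt_gen_unique _ L HL).
    specialize (HL2 (y0 - 1) ltac:(lra)).
    assert (0 < RInt w2 (y0 - 1) y0).
    { apply RInt_gt_0. lra. intros; apply w2_pos. intros; apply w2_cont. }
    lra.
Qed.

End Conc.


Lemma Opt_Sys r rho m sigma theta c1 c2 a b :
  OptBoundaries r rho m sigma theta c1 c2 a b ->
  Sys (fun z => m_hat_d rho m sigma z * phi_hat r rho m sigma z)
      (fun z => m_hat_d rho m sigma z * psi_hat r rho m sigma z)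
      (theta - (r + rho) * c1) (theta + (r + rho) * c2) a b.
Proof.
  intros [h1 [h2 [e1 e2]]]. split; [lra|split; [lra|split]].
  - assert (Hf : (fun z => (z - (theta - (r + rho) * c1)) * (m_hat_d rho m sigma z * phi_hat r rho m sigma z)) =
      (fun z => (z - theta + (r + rho) * c1) * m_hat_d rho m sigma z * phi_hat r rho m sigma z)).
    { apply FunctionalExtensionality.functional_extensionality. intros; ring. }
    rewrite Hf, e1. unfold I1.
    replace (- (theta + (r + rho) * c2 - (theta - (r + rho) * c1))) with (- (r + rho) * (c1 + c2)) by ring. reflexivity.
  - assert (Hf : (fun z => (z - (theta + (r + rho) * c2)) * (m_hat_d rho m sigma z * psi_hat r rho m sigma z)) =
      (fun z => (z - theta - (r + rho) * c2) * m_hat_d rho m sigma z * psi_hat r rho m sigma z)).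
    { apply FunctionalExtensionality.functional_extensionality. intros; ring. }
    rewrite Hf, e2. unfold I2.
    replace (theta + (r + rho) * c2 - (theta - (r + rho) * c1)) with ((r + rho) * (c1 + c2)) by ring. reflexivity.
Qed.

Theorem proposition4p3 (r rho m sigma theta : R) :
  0 < r -> 0 < rho -> 0 < sigma ->
  (* monotonicity in c1 (c2 fixed) *)
  (forall c1 c1' c2 a b a' b',
     0 < c1 + c2 -> 0 < c1' + c2 -> c1 < c1' ->
     OptBoundaries r rho m sigma theta c1 c2 a b ->
     OptBoundaries r rho m sigma theta c1' c2 a' b' ->
     a' < a /\ b < b') /\
  (* monotonicity in c2 (c1 fixed) *)
  (forall c1 c2 c2' a b a' b',
     0 < c1 + c2 -> 0 < c1 + c2' -> c2 < c2' ->
     OptBoundaries r rho m sigma theta c1 c2 a b ->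
     OptBoundaries r rho m sigma theta c1 c2' a' b' ->
     a' < a /\ b < b').
Proof.
  intros hr hrho hs.
  pose proof (w1_cont r rho m sigma hr hrho hs) as Hc1.
  pose proof (w2_cont r rho m sigma hr hrho hs) as Hc2.
  pose proof (w1_pos r rho m sigma hr hrho hs) as Hp1.
  pose proof (w2_pos r rho m sigma hr hrho hs) as Hp2.
  pose proof (w_ratio r rho m sigma hr hrho hs) as Hr.
  pose proof (fun y => proj1 (w1_I r rho m sigma hr hrho hs y)) as He1.
  pose proof (fun y => proj1 (w2_I r rho m sigma hr hrho hs y)) as He2.
  pose proof (fun y => proj2 (w1_I r rho m sigma hr hrho hs y)) as HI1.
  pose proof (fun y => proj2 (w2_I r rho m sigma hr hrho hs y)) as HI2.
  split.
  - intros c1 c1' c2 a b a' b' h1 h2 h12 O1 O2.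
    apply (scen_c1 _ _ Hc1 Hc2 Hp1 Hp2 Hr He1 He2 HI1 HI2
             (theta - (r + rho) * c1) (theta - (r + rho) * c1') (theta + (r + rho) * c2)).
    + assert ((r + rho) * c1 < (r + rho) * c1') by (apply Rmult_lt_compat_l; lra). lra.
    + assert (0 < (r + rho) * (c1 + c2)) by (apply Rmult_lt_0_compat; lra). lra.
    + apply Opt_Sys; auto.
    + apply Opt_Sys; auto.
  - intros c1 c2 c2' a b a' b' h1 h2 h12 O1 O2.
    apply (scen_c2 _ _ Hc1 Hc2 Hp1 Hp2 Hr He1 He2 HI1 HI2
             (theta - (r + rho) * c1) (theta + (r + rho) * c2) (theta + (r + rho) * c2')).
    + assert (0 < (r + rho) * (c1 + c2)) by (apply Rmult_lt_0_compat; lra). lra.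
    + assert ((r + rho) * c2 < (r + rho) * c2') by (apply Rmult_lt_compat_l; lra). lra.
    + apply Opt_Sys; auto.
    + apply Opt_Sys; auto.
Qed.
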